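(* Let $y\in\mathbb{R}^n$, $X\in\mathbb{R}^{n\times p}$, $\lambda>0$, and consider the strong hierarchical lasso with quadratic loss written in the form $$\min_{\phi\in\mathbb{R}^{2p+2p^2}}\ \frac12\|y-\tilde X\phi\|^2+w^T\phi\quad\text{s.t.}\quad D\phi\ge0,\ L\phi=0,$$ with $\phi,\tilde X,w,D,L$ as in the context. Suppose $\hat\phi$ is a solution and let $\mathcal A(\hat\phi)=\{i:[D\hat\phi]_i>0\}$. Let $D_{-\mathcal A(\hat\phi)}$ be the submatrix of rows $D_i$ with $i\notin\mathcal A(\hat\phi)$ and $P=P_{\mathrm{null}(L)\cap\mathrm{null}(D_{-\mathcal A(\hat\phi)})}$. Then $$\hat\phi=(\tilde XP)^+\big(y-(P\tilde X^T)^+w\big)+b$$ for some $b\in\mathrm{null}(\tilde X)\cap\mathrm{null}(L)\cap\mathrm{null}(D_{-\mathcal A(\hat\phi)})$ satisfying $D_i\big[(\tilde XP)^+\big(y-(P\tilde X^T)^+w\big)+b\big]>0$ for all $i\in\mathcal A(\hat\phi)$.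
   Context: $A^+$ denotes the Moore–Penrose pseudoinverse and $P_S$ the orthogonal projection onto a subspace $S$; $\mathrm{null}(\cdot)$ is the null space. Let $x_j$ be the $j$th column of $X$ and $Z\in\mathbb{R}^{n\times p^2}$ the matrix whose column indexed by $(j,k)$ is $x_j*x_k$ (elementwise product), ordered consistently with the vectorization of $p\times p$ matrices. The variable is $\phi=(\beta^+,\beta^-,\mathrm{vec}(\Theta^+),\mathrm{vec}(\Theta^-))$ with $\beta^\pm\in\mathbb{R}^p$, $\Theta^\pm\in\mathbb{R}^{p\times p}$; $\tilde X=(X,\,-X,\,Z/2,\,-Z/2)$ and $w=(\lambda\mathbf 1_p,\lambda\mathbf 1_p,\frac{\lambda}{2}\mathbf 1_{p^2},\frac{\lambda}{2}\mathbf 1_{p^2})$. The rows of $D$ encode the inequality constraints: for each $j$, $\beta^+_j\ge0$, $\beta^-_j\ge0$, and $\beta^+_j+\beta^-_j-\mathbf 1^T(\Theta^+_j+\Theta^-_j)\ge0$ (where $\Theta^\pm_j$ is the $j$th row); and for each $j\ne k$, $\Theta^+_{jk}\ge0$, $\Theta^-_{jk}\ge0$. The rows of $L$ encode the equality constraints $\Theta^+_{jj}=\Theta^-_{jj}=0$ for all $j$ and $\Theta^+-\Theta^-=(\Theta^+-\Theta^-)^T$. (This is the strong hierarchical lasso $\min q(\beta_0,\beta^+-\beta^-,\Theta)+\lambda\mathbf 1^T(\beta^++\beta^-)+\frac\lambda2\sum_{j\ne k}|\Theta_{jk}|$ s.t. $\Theta=\Theta^T$, $\sum_k|\Theta_{jk}|\le\beta^+_j+\beta^-_j$,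 $\beta^\pm\ge0$, with quadratic loss, no intercept, rewritten with $\Theta=\Theta^+-\Theta^-$.) *)

(* Defs.v *)
From HB Require Import structures.
From mathcomp Require Import all_boot all_order all_algebra.
From mathcomp Require Import reals.
From Stdlib Require Import ClassicalEpsilon.
Set Implicit Arguments. Unset Strict Implicit. Unset Printing Implicit Defensive.
Import Order.TTheory GRing.Theory Num.Theory.
Local Open Scope ring_scope.

Section Defs.
Variable R : realType.

(** Moore--Penrose pseudoinverse: the (unique) matrix satisfying the four
    Penrose conditions (it always exists over the reals). *)
Definition penrose m n (A : 'M[R]_(m, n)) (B : 'M[R]_(n, m)) : Prop :=
  [/\ A *m B *m A = A, B *m A *m B = B,
      (A *m B)^T = A *m B & (B *m A)^T = B *m A].

Definition pinv m n (A : 'M[R]_(m, n)) : 'M[R]_(n, m) :=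
  epsilon (inhabits 0) (penrose A).

Definition is_orth_proj N (S : 'cV[R]_N -> Prop) (P : 'M[R]_N) : Prop :=
  [/\ P^T = P, P *m P = P & forall v, S v <-> P *m v = v].

Definition orth_proj N (S : 'cV[R]_N -> Prop) : 'M[R]_N :=
  epsilon (inhabits 0) (is_orth_proj S).

Definition nullsp m N (M : 'M[R]_(m, N)) (v : 'cV[R]_N) : Prop := M *m v = 0.

(** Dimension of phi = (beta+, beta-, vec Theta+, vec Theta-). *)
Definition dimphi (p : nat) : nat := p + (p + (p * p + p * p)).

Definition vecc p (T : 'M[R]_p) : 'cV[R]_(p * p) := (mxvec T)^T.

Definition phi_of p (bp bm : 'cV[R]_p) (Tp Tm : 'M[R]_p) : 'cV[R]_(dimphi p) :=
  col_mx bp (col_mx bm (col_mx (vecc Tp) (vecc Tm))).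

Definition rowblk p (a b : 'rV[R]_p) (c d : 'rV[R]_(p * p)) : 'rV[R]_(dimphi p) :=
  row_mx a (row_mx b (row_mx c d)).

Definition Zmat n p (X : 'M[R]_(n, p)) : 'M[R]_(n, p * p) :=
  \matrix_(r < n) mxvec (\matrix_(j < p, k < p) (X r j * X r k)).

Definition Xtil n p (X : 'M[R]_(n, p)) : 'M[R]_(n, dimphi p) :=
  row_mx X (row_mx (- X) (row_mx (2^-1 *: Zmat X) (- (2^-1 *: Zmat X)))).

Definition wvec p (lam : R) : 'cV[R]_(dimphi p) :=
  col_mx (const_mx lam) (col_mx (const_mx lam)
    (col_mx (const_mx (lam / 2)) (const_mx (lam / 2)))).

(** Row indices of D:
    inl(inl(inl(inl j))) : beta+_j >= 0
    inl(inl(inl(inr j))) : beta-_j >= 0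
    inl(inl(inr j))      : beta+_j + beta-_j - 1^T(Theta+_j + Theta-_j) >= 0
    inl(inr (j,k)), j<>k : Theta+_jk >= 0
    inr (j,k), j<>k      : Theta-_jk >= 0 *)
Definition offdiag p := {jk : 'I_p * 'I_p | jk.1 != jk.2}.
Definition Didx p : finType :=
  ('I_p + 'I_p + 'I_p + offdiag p + offdiag p)%type.

Definition erow p (j : 'I_p) : 'rV[R]_p := delta_mx 0 j.
Definition erow2 p (j k : 'I_p) : 'rV[R]_(p * p) := mxvec (delta_mx j k).
Definition rowsum p (j : 'I_p) : 'rV[R]_(p * p) :=
  mxvec (\matrix_(a < p, b < p) (a == j)%:R).

Definition Drow p (i : Didx p) : 'rV[R]_(dimphi p) :=
  match i with
  | inl (inl (inl (inl j))) => rowblk (erow j) 0 0 0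
  | inl (inl (inl (inr j))) => rowblk 0 (erow j) 0 0
  | inl (inl (inr j)) => rowblk (erow j) (erow j) (- rowsum j) (- rowsum j)
  | inl (inr jk) => rowblk 0 0 (erow2 (sval jk).1 (sval jk).2) 0
  | inr jk => rowblk 0 0 0 (erow2 (sval jk).1 (sval jk).2)
  end.

Definition Dmat p : 'M[R]_(#|Didx p|, dimphi p) :=
  \matrix_(i < #|Didx p|) Drow (enum_val i).

(** Rows of L: Theta+_jj = 0, Theta-_jj = 0, and
    (Theta+ - Theta-)_jk - (Theta+ - Theta-)_kj = 0 for all (j,k). *)
Definition Lidx p : finType := ('I_p + 'I_p + ('I_p * 'I_p))%type.

Definition Lrow p (i : Lidx p) : 'rV[R]_(dimphi p) :=
  match i with
  | inl (inl j) => rowblk 0 0 (erow2 j j) 0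
  | inl (inr j) => rowblk 0 0 0 (erow2 j j)
  | inr jk => rowblk 0 0 (erow2 jk.1 jk.2 - erow2 jk.2 jk.1)
                         (erow2 jk.2 jk.1 - erow2 jk.1 jk.2)
  end.

Definition Lmat p : 'M[R]_(#|Lidx p|, dimphi p) :=
  \matrix_(i < #|Lidx p|) Lrow (enum_val i).

Definition objective n p (y : 'cV[R]_n) (X : 'M[R]_(n, p)) (lam : R)
    (phi : 'cV[R]_(dimphi p)) : R :=
  2^-1 * \sum_(i < n) ((y - Xtil X *m phi) i 0) ^+ 2
  + ((wvec p lam)^T *m phi) 0 0.

Definition feasible p (phi : 'cV[R]_(dimphi p)) : Prop :=
  (forall i, 0 <= (Dmat p *m phi) i 0) /\ Lmat p *m phi = 0.

Definition is_solution n p (y : 'cV[R]_n) (X : 'M[R]_(n, p)) (lam : R)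
    (phi : 'cV[R]_(dimphi p)) : Prop :=
  feasible phi /\
  forall phi', feasible phi' -> objective y X lam phi <= objective y X lam phi'.

Definition active p (phi : 'cV[R]_(dimphi p)) : {set 'I_#|Didx p|} :=
  [set i | 0 < (Dmat p *m phi) i 0].

Definition null_Dinact p (A : {set 'I_#|Didx p|}) (v : 'cV[R]_(dimphi p)) : Prop :=
  forall i, i \notin A -> (Dmat p *m v) i 0 = 0.

End Defs.

(* Main.v *)
Require Import Defs.
From HB Require Import structures.
From mathcomp Require Import all_boot all_order all_algebra.
From mathcomp Require Import reals.
From mathcomp Require Import ring lra.
From Stdlib Require Import ClassicalEpsilon.
Set Implicit Arguments. Unset Strict Implicit. Unset Printing Implicit Defensive.
Import Order.TTheory GRing.Theory Num.Theory.
Local Open Scope ring_scope.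

Section Helpers.
Variable R : realType.

Lemma gram0 a b (M : 'M[R]_(a, b)) : M *m M^T = 0 -> M = 0.
Proof.
move=> H; apply/matrixP => i j; rewrite mxE.
have /matrixP/(_ i i) := H; rewrite !mxE => Hs.
have Hz : \sum_(k < b) M i k * M i k = 0.
  by rewrite -[RHS]Hs; apply: eq_bigr => k _; rewrite mxE.
have := @psumr_eq0P _ _ predT (fun k => M i k * M i k) _ Hz j isT.
have Hp : forall k : 'I_b, predT k -> 0 <= M i k * M i k.
  by move=> k _; rewrite -expr2 sqr_ge0.
move=> /(_ Hp) /eqP; rewrite mulf_eq0 orbb; by move/eqP.
Qed.

Lemma gram_unit r m (B : 'M[R]_(r, m)) : row_free B -> B *m B^T \in unitmx.
Proof.
move=> fB; rewrite -row_free_unit -kermx_eq0; apply/eqP.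
set K := kermx _.
have HK : K *m (B *m B^T) = 0 by exact: mulmx_ker.
have : (K *m B) *m (K *m B)^T = 0.
  by rewrite trmx_mul !mulmxA -(mulmxA K) HK mul0mx.
move/gram0/eqP; rewrite mulmx_free_eq0 //; by move/eqP.
Qed.

Lemma penrose_fact m r n (C : 'M[R]_(m, r)) (F : 'M[R]_(r, n)) :
  row_free F -> row_free C^T ->
  penrose (C *m F) (F^T *m invmx (F *m F^T) *m invmx (C^T *m C) *m C^T).
Proof.
move=> fF fC.
have u1 := gram_unit fF.
have u2 := gram_unit fC; rewrite trmxK in u2.
move: u1 u2.
set G1 := F *m F^T; set G2 := C^T *m C => u1 u2.
have a1 k (X : 'M_(k, r)) : X *m F *m F^T *m invmx G1 = X.
  by rewrite -(mulmxA X F) -/G1 -mulmxA mulmxV // mulmx1.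
have a2 k (X : 'M_(k, r)) : X *m invmx G2 *m C^T *m C = X.
  by rewrite -(mulmxA _ C^T C) -/G2 -mulmxA mulVmx // mulmx1.
have s1 : G1^T = G1 by rewrite /G1 trmx_mul trmxK.
have s2 : G2^T = G2 by rewrite /G2 trmx_mul trmxK.
split.
- by rewrite !mulmxA a1 a2.
- by rewrite !mulmxA a2 a1.
- by rewrite !mulmxA a1 !trmx_mul trmxK trmx_inv s2 mulmxA.
- by rewrite !mulmxA a2 !trmx_mul trmxK trmx_inv s1 mulmxA.
Qed.

Lemma pinv_exists m n (A : 'M[R]_(m, n)) : exists B, penrose A B.
Proof.
have fC : row_free (col_base A)^T.
  by have := col_base_full A; rewrite /row_full /row_free mxrank_tr.
have := penrose_fact (row_base_free A) fC.
rewrite mulmx_base => H; by eexists; exact: H.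
Qed.

Lemma pinvP m n (A : 'M[R]_(m, n)) : penrose A (pinv A).
Proof. rewrite /pinv; case: (epsilon_spec (inhabits 0) _ (pinv_exists A)) => //. Qed.

Lemma kerproj_exists N k (K : 'M[R]_(k, N)) (S : 'cV[R]_N -> Prop) :
  (forall v, S v <-> K *m v = 0) -> exists P, is_orth_proj S P.
Proof.
move=> HS; have [h1 h2 h3 h4] := pinvP K; set Kp := pinv K in h1 h2 h3 h4 *.
exists (1%:M - Kp *m K); split.
- by rewrite linearB /= trmx1 h4.
- rewrite mulmxBl mul1mx mulmxBr mulmx1 mulmxA h2; apply/matrixP=> i j.
  rewrite !mxE; ring.
- move=> v; rewrite HS mulmxBl mul1mx; split.
  + by move=> Hv; rewrite -mulmxA Hv mulmx0 subr0.
  + move=> Hv; have : Kp *m K *m v = 0.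
      have -> : Kp *m K *m v = v - (v - Kp *m K *m v) by rewrite opprB addrC subrK.
      by rewrite Hv subrr.
    by move=> H0; rewrite -h1 -mulmxA -mulmxA (mulmxA Kp) H0 mulmx0.
Qed.

Lemma orth_projP N (S : 'cV[R]_N -> Prop) :
  (exists P, is_orth_proj S P) -> is_orth_proj S (orth_proj S).
Proof. by move=> H; rewrite /orth_proj; apply: epsilon_spec. Qed.

Lemma main_alg N n (Xt : 'M[R]_(n, N)) (P : 'M[R]_N) (y : 'cV[R]_n)
    (w phi : 'cV[R]_N) :
  P^T = P -> P *m P = P -> P *m phi = phi ->
  P *m (Xt^T *m (Xt *m phi - y) + w) = 0 ->
  let u := pinv (Xt *m P) *m (y - pinv (P *m Xt^T) *m w) in
  P *m u = u /\ Xt *m (phi - u) = 0.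
Proof.
move=> sP iP Pphi Hn u.
set M := Xt *m P.
have eN : P *m Xt^T = M^T by rewrite /M trmx_mul sP.
rewrite eN in u *.
have [m1 m2 m3 m4] := pinvP M; set Mp := pinv M in m1 m2 m3 m4 u *.
have [n1 n2 n3 n4] := pinvP M^T; set Np := pinv M^T in n1 n2 n3 n4 u *.
have PMp : P *m Mp = Mp.
  have -> : Mp = M^T *m (Mp^T *m Mp) by rewrite -{1}m2 -m4 trmx_mul !mulmxA.
  by rewrite /M trmx_mul sP !mulmxA iP.
have Pu : P *m u = u by rewrite /u mulmxA PMp.
split => //.
set d := phi - u.
have Pd : P *m d = d by rewrite /d mulmxBr Pphi Pu.
have MtMMp : M^T *m M *m Mp = M^T.
  by rewrite -mulmxA -m3 -trmx_mul m1.
have NNpP : M^T *m Np *m P = M^T *m Np.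
  by rewrite -n3 trmx_mul trmxK /M !mulmxA -(mulmxA _ P P) iP.
have Pw : P *m w = M^T *m y - M^T *m Xt *m phi.
  move: Hn; rewrite mulmxDr !mulmxBr !mulmxA eN => /eqP; rewrite addrC addr_eq0.
  by move=> /eqP ->; rewrite opprB.
have NNpw : M^T *m Np *m w = P *m w.
  by rewrite -NNpP -mulmxA Pw mulmxBr !mulmxA n1.
have key : M^T *m (M *m d) = 0.
  have e1 : M *m d = Xt *m d by rewrite /M -mulmxA Pd.
  have e2 : Xt *m u = M *m u by rewrite /M -mulmxA Pu.
  rewrite e1 /d mulmxBr mulmxBr e2 /u (mulmxA M Mp) (mulmxA M^T (M *m Mp)) (mulmxA M^T M Mp) MtMMp mulmxBr !mulmxA NNpw Pw.
  by rewrite subKr subrr.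
have Md : M *m d = 0.
  apply: trmx_inj; rewrite trmx0; apply: gram0.
  by rewrite trmxK trmx_mul -mulmxA key mulmx0.
by rewrite -Pd mulmxA.
Qed.

Definition obj n N (Xt : 'M[R]_(n, N)) (y : 'cV[R]_n) (w phi : 'cV[R]_N) : R :=
  2^-1 * \sum_(i < n) ((y - Xt *m phi) i 0) ^+ 2 + (w^T *m phi) 0 0.

Lemma obj_expand n N (Xt : 'M[R]_(n, N)) y w phi d t :
  obj Xt y w (phi + t *: d) = obj Xt y w phi
    + t * ((w - Xt^T *m (y - Xt *m phi))^T *m d) 0 0
    + t ^+ 2 * (2^-1 * \sum_(i < n) ((Xt *m d) i 0) ^+ 2).
Proof.
rewrite /obj.
set r := y - Xt *m phi; set v := Xt *m d.
have hA i : (y - Xt *m (phi + t *: d)) i 0 = r i 0 - t * v i 0.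
  rewrite mulmxDr -scalemxAr !mxE; ring.
have hB : (w^T *m (phi + t *: d)) 0 0 = (w^T *m phi) 0 0 + t * (w^T *m d) 0 0.
  by rewrite mulmxDr -scalemxAr !mxE.
have hC : ((w - Xt^T *m r)^T *m d) 0 0 = (w^T *m d) 0 0 - \sum_i r i 0 * v i 0.
  rewrite linearB /= mulmxBl trmx_mul trmxK -mulmxA !mxE; congr (_ - _).
  by apply: eq_bigr => i _; rewrite mxE.
rewrite hB hC.
have -> : \sum_(i < n) ((y - Xt *m (phi + t *: d)) i 0) ^+ 2 =
   \sum_(i < n) (r i 0) ^+ 2 - 2 * t * \sum_i r i 0 * v i 0
   + t ^+ 2 * \sum_(i < n) (v i 0) ^+ 2.
  rewrite !mulr_sumr -sumrB -big_split /=; apply: eq_bigr => i _.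
  rewrite hA; ring.
by field.
Qed.

Lemma quad_zero (a c e : R) : 0 <= c -> 0 < e ->
  (forall t, `|t| <= e -> 0 <= a * t + t ^+ 2 * c) -> a = 0.
Proof.
move=> c0 e0 H; apply/eqP; apply/negPn/negP => an0.
have na : 0 < `|a| by rewrite normr_gt0.
set q := `|a| / (c + 1).
have c1 : 0 < c + 1 by lra.
have hq : q * (c + 1) = `|a| by rewrite /q mulfVK //; lra.
have q0 : 0 < q by rewrite /q divr_gt0.
suff [t [t0 te tq]] : exists t, [/\ 0 < t, t <= e & t <= q].
  have h1 := H t; have h2 := H (- t).
  rewrite normrN gtr0_norm // in h1 h2.
  have {h1}h1 := h1 te; have {h2}h2 := h2 te.
  have ha : `|a| * t <= c * t ^+ 2.
    case: (lerP 0 a) => ha.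
      rewrite ger0_norm //; nra.
    rewrite ltr0_norm //; nra.
  have h3 : c * t <= c * q by rewrite ler_wpM2l.
  have h4 : `|a| <= c * t.
    by rewrite -(ler_pM2r t0) -mulrA -expr2.
  have : c * q = `|a| - q by rewrite -hq; ring.
  lra.
case: (lerP e q) => h; first by exists e.
by exists q; split => //; apply: ltW.
Qed.

Lemma fin_lb (I : finType) (P : pred I) (f : I -> R) :
  (forall i, P i -> 0 < f i) -> exists2 e, 0 < e & forall i, P i -> e <= f i.
Proof.
move=> Hf; set S := \sum_(i | P i) (f i)^-1.
have S0 : 0 <= S by apply: sumr_ge0 => i /Hf fi; rewrite invr_ge0 ltW.
exists (S + 1)^-1; first by rewrite invr_gt0; lra.
move=> i Pi; have fi := Hf i Pi.
rewrite -[f i]invrK lef_pV2 ?posrE ?invr_gt0 //; last by lra.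
rewrite /S (bigD1 i) //=.
have : 0 <= \sum_(j | P j && (j != i)) (f j)^-1.
  by apply: sumr_ge0 => j /andP [/Hf fj _]; rewrite invr_ge0 ltW.
lra.
Qed.

End Helpers.

Theorem lemma1 (R : realType) (n p : nat) (y : 'cV[R]_n) (X : 'M[R]_(n, p))
    (lam : R) (phihat : 'cV[R]_(dimphi p)) :
  0 < lam ->
  is_solution y X lam phihat ->
  let A := active phihat in
  let P := orth_proj (fun v => nullsp (Lmat R p) v /\ null_Dinact A v) in
  let Xt := Xtil X in
  let u := pinv (Xt *m P) *m (y - pinv (P *m Xt^T) *m wvec p lam) in
  exists b : 'cV[R]_(dimphi p),
    [/\ nullsp Xt b, nullsp (Lmat R p) b, null_Dinact A b,
        phihat = u + b &
        forall i, i \in A -> 0 < (Dmat R p *m (u + b)) i 0].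
Proof.
move=> lam0 [[Dfeas Lphi] Hopt] A P Xt u.
set Sv := fun v => nullsp (Lmat R p) v /\ null_Dinact A v.
set dd := \row_(i < #|Didx p|) ((i \notin A)%:R : R).
have HP : is_orth_proj Sv P.
  apply: orth_projP.
  apply: (@kerproj_exists _ _ _ (col_mx (Lmat R p) (diag_mx dd *m Dmat R p))).
  move=> v; rewrite mul_col_mx; split.
  - move=> [Lv Dv]; apply/eqP; rewrite col_mx_eq0; apply/andP; split.
      by apply/eqP; exact: Lv.
    apply/eqP/matrixP => i j; rewrite -mulmxA mul_diag_mx mxE (ord1 j) /dd mxE [in RHS]mxE.
    case: (boolP (i \in A)) => hi; first by rewrite mul0r.
    by rewrite (Dv i hi) mulr0.
  - move/eqP; rewrite col_mx_eq0 => /andP [/eqP Lv /eqP Dv]; split => //.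
    move=> i hi; move/matrixP: Dv => /(_ i 0).
    by rewrite -mulmxA mul_diag_mx mxE /dd mxE [in RHS]mxE hi mul1r.
have [sP iP SP] := HP.
have Sphi : Sv phihat.
  split => // i hi; move: hi; rewrite /A inE -leNgt => hi.
  by apply: le_anti; rewrite hi Dfeas.
have Pphi : P *m phihat = phihat by apply/SP.
set g := wvec p lam - Xt^T *m (y - Xt *m phihat).
have E phi : objective y X lam phi = obj Xt y (wvec p lam) phi by [].
have stat : forall s, Sv s -> (g^T *m s) 0 0 = 0.
  move=> s [Ls Ds].
  have [e e0 He] : exists2 e, 0 < e & forall i, i \in A ->
      e <= (Dmat R p *m phihat) i 0 / (`|(Dmat R p *m s) i 0| + 1).
    apply: fin_lb => i; rewrite /A inE => hi.
    by rewrite divr_gt0 // ltr_wpDl.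
  apply: (@quad_zero _ _ (2^-1 * \sum_i ((Xt *m s) i 0) ^+ 2) e _ e0).
    by rewrite mulr_ge0 ?invr_ge0 // ?sumr_ge0 // => i _; rewrite sqr_ge0.
  move=> t ht.
  have feas : feasible (phihat + t *: s).
    split.
    - move=> i; rewrite mulmxDr -scalemxAr mxE [in X in _ + X]mxE.
      case: (boolP (i \in A)) => hi.
      + have hf := He i hi; move: hi; rewrite /A inE => hi /=.
        move: hf; set x := (Dmat R p *m phihat) i 0; set z := (Dmat R p *m s) i 0 => hf.
        have z0 : 0 <= `|z| := normr_ge0 z.
        have hx : x / (`|z| + 1) * (`|z| + 1) = x by rewrite mulfVK //; apply: lt0r_neq0; lra.
        have h1 : - `|t * z| <= t * z := lerNnormlW (lexx _).
        rewrite normrM in h1.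
        have t0 : 0 <= `|t| := normr_ge0 t.
        move: hf hx; set f := x / _ => hf hx.
        nra.
      + by rewrite (Ds i hi) mulr0 addr0.
    - by rewrite /nullsp mulmxDr -scalemxAr Ls Lphi scaler0 addr0.
  have := Hopt _ feas; rewrite !E obj_expand -/g.
  lra.
have Pg : P *m g = 0.
  have hS : Sv (P *m g) by apply/SP; rewrite mulmxA iP.
  have h0 := stat _ hS.
  have h1 : g^T *m (P *m g) = 0 by apply/matrixP => i j; rewrite !ord1 h0 mxE.
  apply: trmx_inj; rewrite trmx0; apply: gram0.
  by rewrite trmxK trmx_mul sP -mulmxA (mulmxA P) iP h1.
have Hn : P *m (Xt^T *m (Xt *m phihat - y) + wvec p lam) = 0.
  by rewrite (_ : Xt^T *m (Xt *m phihat - y) + wvec p lam = g) // /g addrC -mulmxN opprB.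
have [Pu Xd] := main_alg sP iP Pphi Hn.
exists (phihat - u).
have Sb : Sv (phihat - u) by apply/SP; rewrite mulmxBr Pphi Pu.
case: Sb => Lb Db.
split => //; first by rewrite addrC subrK.
by move=> i; rewrite addrC subrK /A inE.
Qed.
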